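(* Let $m\ge 2$. The Lucas numbers are complete mod $m$ if and only if $m\in\{2,4,6,7,14\}$ or $m=3^j$ for some integer $j\ge1$.
   Context: The Lucas numbers are the sequence $L_1=1$, $L_2=3$, $L_{n+1}=L_{n-1}+L_n$ (so $1,3,4,7,11,18,\dots$). A sequence is complete mod $m$ if every residue class modulo $m$ contains some term of the sequence, and defective mod $m$ otherwise. *)

(* Defs.v *)
From mathcomp Require Import all_boot.
Set Implicit Arguments. Unset Strict Implicit. Unset Printing Implicit Defensive.

(* Lucas numbers with the standard offset: lucas 0 = 2, lucas 1 = 1, lucas 2 = 3,
   lucas (n+2) = lucas n + lucas (n+1).  The paper's sequence is L_1, L_2, ...
   i.e. lucas n for n >= 1. *)
Fixpoint lucas_aux (n : nat) : nat * nat :=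
  match n with
  | 0 => (2, 1)
  | k.+1 => let (a, b) := lucas_aux k in (b, a + b)
  end.

Definition lucas (n : nat) : nat := (lucas_aux n).1.

Definition complete_mod (L : nat -> nat) (m : nat) : Prop :=
  forall r : nat, r < m -> exists n : nat, 1 <= n /\ L n = r %[mod m].

(* Main.v *)
Require Import Defs.
From mathcomp Require Import all_boot all_order all_algebra all_field zify ring lra.
Import Order.TTheory GRing.Theory Num.Theory.
Local Open Scope ring_scope.

Fixpoint fibp (n : nat) : int * int :=
  match n with 0 => (0, 1) | k.+1 => ((fibp k).2, (fibp k).1 + (fibp k).2) end.
Definition Fz n := (fibp n).1.
Definition Lz n : int := (lucas n)%:Z.

Lemma FzSS n : Fz n.+2 = Fz n + Fz n.+1.
Proof. by []. Qed.

Lemma lucasSS n : lucas n.+2 = (lucas n + lucas n.+1)%N.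
Proof. rewrite /lucas /=. by case: (lucas_aux n). Qed.

Lemma LzSS n : Lz n.+2 = Lz n + Lz n.+1.
Proof. by rewrite /Lz lucasSS PoszD. Qed.

Lemma addF (x : nat -> int) (xSS : forall n, x n.+2 = x n + x n.+1) n k :
  x (n + k.+1)%N = x n * Fz k + x n.+1 * Fz k.+1.
Proof.
suff H : x (n + k.+1)%N = x n * Fz k + x n.+1 * Fz k.+1 /\
         x (n + k.+2)%N = x n * Fz k.+1 + x n.+1 * Fz k.+2 by case: H.
elim: k => [|k [IH1 IH2]].
  rewrite !addnS !addn0 xSS /Fz /=; split; ring.
split; first exact IH2.
rewrite !addnS in IH1 IH2 *. rewrite xSS IH1 IH2 !FzSS; ring.
Qed.

Lemma cassini n : Fz n.+1 ^+ 2 - Fz n * Fz n.+1 - Fz n ^+ 2 = (-1) ^+ n.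
Proof.
elim: n => [|n IH]; first by rewrite /Fz.
rewrite FzSS [(-1) ^+ _.+1]exprS -IH; ring.
Qed.

Lemma LzF n : Lz n = 2 * Fz n.+1 - Fz n.
Proof.
suff H : Lz n = 2 * Fz n.+1 - Fz n /\ Lz n.+1 = 2 * Fz n.+2 - Fz n.+1 by case: H.
elim: n => [|n [IH1 IH2]]; first by split.
split; first exact IH2.
rewrite LzSS IH1 IH2 !FzSS; ring.
Qed.

Lemma LF_id n : Lz n ^+ 2 - 5 * Fz n ^+ 2 = 4 * (-1) ^+ n.
Proof. rewrite LzF -cassini; ring. Qed.

Lemma not3M x y : ~~ (3 %| x)%Z -> ~~ (3 %| y)%Z -> ~~ (3 %| x * y)%Z.
Proof. rewrite !unfold_in /= abszM Euclid_dvdM //. by move=> /negPf-> /negPf->. Qed.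

Lemma cop3 k y : ~~ (3 %| y)%Z -> coprimez (3 ^+ k) y.
Proof.
move=> h; case: k => [|k]; first by apply/coprimezP; exists (1,0); rewrite /= expr0 mul1r mul0r addr0.
rewrite coprimez_pexpl // /coprimez; move: h; rewrite unfold_in /= -prime_coprime //.
Qed.

Lemma per8 (x : nat -> int) (xSS : forall n, x n.+2 = x n + x n.+1) n t :
  (3 %| x (n + 8 * t)%N - x n)%Z.
Proof.
elim: t => [|t IH]; first by rewrite muln0 addn0 subrr dvdz0.
have -> : (n + 8 * t.+1 = (n + 8 * t) + 7.+1)%N by rewrite mulnS; lia.
rewrite addF //.
have -> : Fz 7 = 13 by []. have -> : Fz 8 = 21 by [].
move: IH; set a := x (n + 8 * t)%N; set b := x (n + 8 * t).+1.
move=> IH; lia.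
Qed.

Lemma L3 n : (n %% 4 != 0)%N -> ~~ (3 %| Lz n.+2)%Z.
Proof.
move=> hn.
have E : n.+2 = ((n.+2 %% 8) + 8 * (n.+2 %/ 8))%N.
  by rewrite {1}(divn_eq n.+2 8); lia.
have hs : (n.+2 %% 8 < 8)%N by rewrite ltn_mod.
have hne : (n.+2 %% 8 != 2)%N && (n.+2 %% 8 != 6)%N by lia.
rewrite E; have := @per8 Lz LzSS (n.+2 %% 8) (n.+2 %/ 8).
move: (n.+2 %% 8)%N hs hne (n.+2 %/ 8)%N => s hs hne q.
move: (Lz (s + 8 * q)%N) => v.
move: s hs hne => [|[|[|[|[|[|[|[|s]]]]]]]] //= _ _; rewrite /Lz /lucas /=; lia.
Qed.

Definition Pn j := (8 * 3 ^ j)%N.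
Definition Qn j := (Pn j).-1.
Lemma PnQ j : Pn j = (Qn j).+1.
Proof. by rewrite /Qn prednK // /Pn muln_gt0 expn_gt0. Qed.

Lemma Fz3P Q : Fz (3 * Q.+1)%N =
  Fz Q.+1 * (3 * Fz Q ^+ 2 + 3 * Fz Q * Fz Q.+1 + 2 * Fz Q.+1 ^+ 2).
Proof.
have h1 := @addF Fz FzSS Q.+1 Q.
have h2 := @addF Fz FzSS Q.+1 Q.+1.
have h3 := @addF Fz FzSS (Q.+1 + Q.+1) Q.
have -> : (3 * Q.+1 = Q.+1 + Q.+1 + Q.+1)%N by lia.
rewrite h3 h1 -addnS h2 !FzSS; ring.
Qed.

Lemma Bj j : exists beta, Fz (Pn j) = 3 ^+ j.+1 * beta /\ ~~ (3 %| beta)%Z.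
Proof.
elim: j => [|j [be [hb hnb]]]; first by exists 7.
have -> : Pn j.+1 = (3 * (Qn j).+1)%N by rewrite -PnQ /Pn expnS; lia.
rewrite Fz3P -PnQ hb.
have cas := cassini (Qn j); rewrite -PnQ hb in cas.
set a := Fz (Qn j) in cas *.
exists (be * (a ^+ 2 + a * (3 ^+ j.+1 * be) + 2 * (3 ^+ j * be) * (3 ^+ j.+1 * be))).
split; first by rewrite !exprS; ring.
apply: not3M => //.
have hs : (-1) ^+ Qn j = 1 :> int \/ (-1) ^+ Qn j = -1 :> int.
  by rewrite -signr_odd; case: (odd _); [right|left].
move: cas hs; rewrite (exprS 3 j); move: ((-1) ^+ Qn j) (3 ^+ j) => s t cas hs.
have e : a ^+ 2 = 9 * (t * be) ^+ 2 - 3 * (a * (t * be)) - s.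
  rewrite -cas; ring.
have -> : a ^+ 2 + a * (3 * t * be) + 2 * (t * be) * (3 * t * be) =
   15 * (t * be) ^+ 2 - 3 * (a * (t * be)) + 3 * (a * (t * be)) - s.
  rewrite e; ring.
move: (t * be) => w; move: (a * w) => v; lia.
Qed.

Lemma Qn_eq j : Qn j = (7 + 8 * (3 ^ j - 1))%N.
Proof. rewrite /Qn /Pn; have := expn_gt0 3 j; lia. Qed.

Lemma Cj j : (3 ^+ j.+2 %| 2 * Fz (Qn j) + Fz (Pn j) - 2)%Z.
Proof.
have [be [hb _]] := Bj j.
have ha : (3 %| Fz (Qn j) - 13)%Z.
  by rewrite Qn_eq; have := @per8 Fz FzSS 7 (3 ^ j - 1).
have hodd : odd (Qn j) by rewrite Qn_eq oddD oddM.
have cas := cassini (Qn j); rewrite -PnQ -signr_odd hodd expr1 in cas.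
rewrite hb in cas *.
set a := Fz (Qn j) in ha cas *.
have hc : coprimez (3 ^+ j.+2) (2 * a + 3 ^+ j.+1 * be + 2).
  apply: cop3; rewrite exprS; move: (3 ^+ j * be) => w; lia.
rewrite -(Gauss_dvdzl _ hc).
have -> : (2 * a + 3 ^+ j.+1 * be - 2) * (2 * a + 3 ^+ j.+1 * be + 2) =
   (5 * 3 ^+ j * be ^+ 2) * 3 ^+ j.+2.
  move: cas; rewrite [3 ^+ j.+2]exprS [3 ^+ j.+1]exprS; move: (3 ^+ j) => t cas.
  apply/eqP; rewrite -subr_eq0; apply/eqP.
  transitivity (-4 * ((3 * t * be) ^+ 2 - a * (3 * t * be) - a ^+ 2 + 1)).
    ring.
  by rewrite cas; ring.
exact: dvdz_mull.
Qed.

Lemma stepL j n : (3 ^+ j.+2 %| 2 * (Lz (n + Pn j) - Lz n) + Fz (Pn j) * Lz n.+2)%Z.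
Proof.
have [be [hb _]] := Bj j.
have /dvdzP [c hc] := Cj j.
rewrite PnQ (@addF Lz LzSS) -PnQ LzSS hb.
apply/dvdzP; exists (c * Lz n + be * Lz n.+1).
have -> : 2 * (Lz n * Fz (Qn j) + Lz n.+1 * (3 ^+ j.+1 * be) - Lz n) +
  3 ^+ j.+1 * be * (Lz n + Lz n.+1) =
  Lz n * (2 * Fz (Qn j) + 3 ^+ j.+1 * be - 2) + 3 * 3 ^+ j.+1 * be * Lz n.+1 by ring.
rewrite -hb hc ?hb !exprS; ring.
Qed.

Lemma iterL j n k : (3 ^+ j.+2 %| 2 * (Lz (n + k * Pn j) - Lz n) + k%:Z * Fz (Pn j) * Lz n.+2)%Z.
Proof.
have [be [hb _]] := Bj j.
elim: k => [|k IH]; first by rewrite mul0n addn0 subrr mulr0 mul0r mul0r addr0 dvdz0.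
have e : (n + k.+1 * Pn j = (n + k * Pn j) + Pn j)%N by rewrite mulSn; lia.
have /dvdzP [c1 h1] := stepL j (n + k * Pn j).
move/dvdzP: IH => [c2 h2].
have /dvdzP [v hv] : (3 %| Lz (n + k * Pn j).+2 - Lz n.+2)%Z.
  have -> : ((n + k * Pn j).+2 = n.+2 + 8 * (k * 3 ^ j))%N by rewrite /Pn; lia.
  exact: per8 LzSS _ _.
rewrite e; apply/dvdzP; exists (c1 + c2 - be * v).
have -> : 2 * (Lz (n + k * Pn j + Pn j) - Lz n) + k.+1%:Z * Fz (Pn j) * Lz n.+2 =
  (2 * (Lz (n + k * Pn j + Pn j) - Lz (n + k * Pn j)) + Fz (Pn j) * Lz (n + k * Pn j).+2)
  + (2 * (Lz (n + k * Pn j) - Lz n) + k%:Z * Fz (Pn j) * Lz n.+2)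
  - Fz (Pn j) * (Lz (n + k * Pn j).+2 - Lz n.+2).
  rewrite intS; ring.
rewrite h1 h2 hv hb !exprS; ring.
Qed.

Lemma comp3 j (r : int) : exists n, (n %% 4 != 0)%N /\ (3 ^+ j.+1 %| Lz n - r)%Z.
Proof.
elim: j r => [|j IH] r.
  rewrite expr1.
  have : (3 %| 3 - r)%Z \/ (3 %| 1 - r)%Z \/ (3 %| 11 - r)%Z by clear; lia.
  case=> [h|[h|h]]; [exists 2%N | exists 1%N | exists 5%N]; by [].
have [n [hn /dvdzP [t ht]]] := IH r.
have [be [hb hnb]] := Bj j.
have hg : ~~ (3 %| be * Lz n.+2)%Z by apply: not3M => //; exact: L3.
move: hg; move hgdef : (be * Lz n.+2) => g hg.
have [k [hk hkg]] : exists k : nat, (k < 3)%N /\ (3 %| 2 * t - k%:Z * g)%Z.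
  have : (3 %| 2 * t)%Z \/ (3 %| 2 * t - g)%Z \/ (3 %| 2 * t - 2 * g)%Z.
    by move: hg; clear; lia.
  case=> [h|[h|h]]; [exists 0%N | exists 1%N | exists 2%N]; split => //.
  - by rewrite mul0r subr0.
  - by rewrite mul1r.
exists (n + k * Pn j)%N; split.
  rewrite /Pn mulnCA; move: (k * 3 ^ j)%N => w; lia.
have hc : coprimez (3 ^+ j.+2) 2 by apply: cop3.
rewrite -(Gauss_dvdzr _ hc).
have /dvdzP [c hcc] := iterL j n k.
move/dvdzP: hkg => [e he].
apply/dvdzP; exists (c + e).
set m := (n + k * Pn j)%N in hcc *.
have -> : 2 * (Lz m - r) = (2 * (Lz m - Lz n) + k%:Z * Fz (Pn j) * Lz n.+2)
   - k%:Z * Fz (Pn j) * Lz n.+2 + 2 * (Lz n - r) by ring.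
rewrite hcc ht hb [3 ^+ j.+2]exprS [3 ^+ j.+1]exprS.
move: (3 ^+ j) => T0.
apply/eqP; rewrite -subr_eq0; apply/eqP.
transitivity ((3 * T0) * (2 * t - k%:Z * g - e * 3)); first by rewrite -hgdef; ring.
by rewrite he subrr mulr0.
Qed.

Lemma PoszXn (a j : nat) : (a ^ j)%N%:Z = a%:Z ^+ j.
Proof. elim: j => // j IH; by rewrite expnS exprS PoszM IH. Qed.

Lemma complete_pow3 j : (1 <= j)%N -> complete_mod lucas (3 ^ j).
Proof.
case: j => [//|j] _ r hr.
have [n [hn hd]] := comp3 j r%:Z.
exists n; split; first by move: hn; clear; lia.
apply/eqP; rewrite -(eqz_nat (lucas n %% 3 ^ j.+1)%N) -!modz_nat.
apply/eqP; apply/eqP; rewrite eqz_mod_dvd.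
by rewrite PoszXn.
Qed.


Definition stepm m (s : nat * nat) := (s.2, (s.1 + s.2) %% m)%N.
Definition stm m n := iter n (stepm m) (2 %% m, 1 %% m)%N.

Lemma stm_lucas m n : stm m n = (lucas n %% m, (lucas_aux n).2 %% m)%N.
Proof.
elim: n => [//|n IH]; rewrite /stm iterS -/(stm m n) IH /stepm /lucas /=.
by case: (lucas_aux n) => a b /=; rewrite modnDm.
Qed.

Definition compl_check m K :=
  all (fun r => has (fun i => (stm m i).1 == r) (iota 1 K)) (iota 0 m).

Lemma compl_checkP m K : compl_check m K -> complete_mod lucas m.
Proof.
move=> /allP h r hr.
have := h r; rewrite mem_iota add0n hr => /(_ isT) /hasP [i].
rewrite mem_iota => /andP [hi _] /eqP hs.
exists i; split => //.
by rewrite -hs stm_lucas /= modn_mod.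
Qed.

Definition defect_check m K r :=
  [&& (0 < K)%N, stm m K == stm m 0, (r < m)%N & all (fun i => (stm m i).1 != r) (iota 0 K)].

Lemma defect_checkP m K r : defect_check m K r -> ~ complete_mod lucas m.
Proof.
case/and4P => hK /eqP hper hr /allP hall hc.
have [n [_ hn]] := hc r hr.
have hper' : forall n, stm m n = stm m (n %% K).
  move=> k; rewrite {1}(divn_eq k K); elim: (k %/ K)%N => [|q IH]; first by rewrite mul0n add0n.
  by rewrite mulSn -addnA addnC /stm iterD -/(stm m K) hper /= -/(stm m _) IH.
have := hall (n %% K)%N; rewrite mem_iota add0n ltn_mod hK => /(_ isT).
rewrite -hper' stm_lucas /= hn modn_small // eqxx. done.
Qed.

Lemma def5 : ~ complete_mod lucas 5. Proof. by apply: (@defect_checkP 5 4 0); vm_compute. Qed.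
Lemma def8 : ~ complete_mod lucas 8. Proof. by apply: (@defect_checkP 8 12 0); vm_compute. Qed.
Lemma def11 : ~ complete_mod lucas 11. Proof. by apply: (@defect_checkP 11 10 5); vm_compute. Qed.
Lemma def12 : ~ complete_mod lucas 12. Proof. by apply: (@defect_checkP 12 24 0); vm_compute. Qed.
Lemma def13 : ~ complete_mod lucas 13. Proof. by apply: (@defect_checkP 13 28 0); vm_compute. Qed.
Lemma def17 : ~ complete_mod lucas 17. Proof. by apply: (@defect_checkP 17 36 0); vm_compute. Qed.
Lemma def18 : ~ complete_mod lucas 18. Proof. by apply: (@defect_checkP 18 24 5); vm_compute. Qed.
Lemma def19 : ~ complete_mod lucas 19. Proof. by apply: (@defect_checkP 19 18 5); vm_compute. Qed.
Lemma def21 : ~ complete_mod lucas 21. Proof. by apply: (@defect_checkP 21 16 0); vm_compute. Qed.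
Lemma def28 : ~ complete_mod lucas 28. Proof. by apply: (@defect_checkP 28 48 0); vm_compute. Qed.
Lemma def49 : ~ complete_mod lucas 49. Proof. by apply: (@defect_checkP 49 112 5); vm_compute. Qed.

Lemma comp_small m : m \in [:: 2; 4; 6; 7; 14]%N -> complete_mod lucas m.
Proof.
rewrite !inE => /orP[/eqP->|/orP[/eqP->|/orP[/eqP->|/orP[/eqP->|/eqP->]]]].
- by apply: (@compl_checkP 2 3); vm_compute.
- by apply: (@compl_checkP 4 6); vm_compute.
- by apply: (@compl_checkP 6 24); vm_compute.
- by apply: (@compl_checkP 7 16); vm_compute.
- by apply: (@compl_checkP 14 48); vm_compute.
Qed.

Lemma complete_dvd m d : (0 < m)%N -> (0 < d)%N -> (d %| m)%N ->
  complete_mod lucas m -> complete_mod lucas d.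
Proof.
move=> hm hd hdm hc r hr.
have hrm : (r < m)%N by apply: leq_trans hr (dvdn_leq hm hdm).
have [n [hn1 hn]] := hc r hrm.
exists n; split => //.
by apply/eqP; rewrite -(modn_dvdm _ hdm) hn modn_dvdm.
Qed.

Section FF.
Variable F : finFieldType.
Variable h2 : (2 : F) != 0.

Definition issq (x : F) : bool := [exists y : F, y ^+ 2 == x].
Definition chi (x : F) : int := if x == 0 then 0 else if issq x then 1 else -1.
Definition nrt (x : F) : nat := #|[pred y : F | y ^+ 2 == x]|.

Lemma issqP x : reflect (exists y, y ^+ 2 = x) (issq x).
Proof.
apply: (iffP existsP) => [[y /eqP h]|[y h]]; exists y => //; exact/eqP.
Qed.

Lemma chi0 : chi 0 = 0. Proof. by rewrite /chi eqxx. Qed.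

Lemma chi_vals x : x != 0 -> chi x = 1 \/ chi x = -1.
Proof. by rewrite /chi => /negPf ->; case: (issq x); [left|right]. Qed.

Lemma chi_eq0 x : (chi x == 0) = (x == 0).
Proof. by rewrite /chi; case: (x == 0) => //; case: (issq x). Qed.

Lemma nrtE x : (nrt x)%:Z = 1 + chi x.
Proof.
rewrite /nrt /chi; have [->|xn0] := eqVneq x 0.
  rewrite (eq_card (B := pred1 (0 : F))) ?card1 // => y.
  by rewrite !inE sqrf_eq0.
case: (issqP x) => [[z hz]|hn].
  rewrite (eq_card (B := pred2 z (- z))) ?card2.
    suff -> : (z != - z) by [].
    apply/negP => /eqP h; move: xn0; rewrite -hz.
    have : z *+ 2 = 0 by rewrite mulr2n {1}h addNr.
    have h2' : (2%:R : F) != 0 by [].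
    rewrite -mulr_natl => /eqP; rewrite mulf_eq0 (negPf h2) /= => /eqP ->.
    by rewrite exprS mul0r eqxx.
  by move=> y; rewrite !inE -hz eqf_sqr.
rewrite (eq_card (B := pred0)) ?card0 // => y.
rewrite !inE; apply/negP => /eqP h; apply: hn; by exists y.
Qed.

Lemma sumsq (g : F -> int) : \sum_a g (a ^+ 2) = \sum_u (1 + chi u) * g u.
Proof.
rewrite (partition_big (fun a : F => a ^+ 2) predT) //=.
apply: eq_bigr => u _.
rewrite -nrtE (eq_bigr (fun _ => g u)); last by move=> a /eqP ->.
by rewrite sumr_const -mulr_natl natz.
Qed.

Lemma sum_chi : \sum_u chi u = 0.
Proof.
have e : \sum_u (1 + chi u) * (1:int) = \sum_(u : F) (1:int) + \sum_u chi u.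
  by rewrite -big_split; apply: eq_bigr => u _; rewrite mulr1.
have h := sumsq (fun _ => 1); rewrite /= e in h.
by apply: (addrI (\sum_(u:F) (1:int))); rewrite addr0 -h.
Qed.

Lemma issq_sq_mul t x : t != 0 -> issq (t ^+ 2 * x) = issq x.
Proof.
move=> tn0; apply/issqP/issqP => [[y hy]|[y hy]].
  exists (y / t); rewrite expr_div_n hy mulrC mulrA mulVf ?mul1r //.
  by rewrite expf_neq0.
by exists (t * y); rewrite exprMn hy.
Qed.

Lemma chi_sq_mul t x : t != 0 -> chi (t ^+ 2 * x) = chi x.
Proof.
move=> tn0; rewrite /chi issq_sq_mul // mulf_eq0 expf_eq0 /= (negPf tn0) /=.
by [].
Qed.

Lemma chi_sq t : t != 0 -> chi (t ^+ 2) = 1.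
Proof.
move=> tn0; rewrite -(mulr1 (t ^+ 2)) chi_sq_mul // /chi oner_eq0.
suff -> : issq 1 by []. by apply/issqP; exists 1; rewrite expr1n.
Qed.

Definition Qs := [set x : F | (x != 0) && issq x].
Definition Ns := [set x : F | (x != 0) && ~~ issq x].

Lemma card_QN : #|Qs| = #|Ns|.
Proof.
have e : forall x, chi x = (x \in Qs)%:R - (x \in Ns)%:R.
  by move=> x; rewrite /chi !inE; case: (x == 0); case: (issq x).
have cs : forall A : {set F}, \sum_x ((x \in A)%:R : int) = #|A|%:R.
  move=> A; rewrite -sumr_const [RHS]big_mkcond /=; apply: eq_bigr => x _.
  by case: (x \in A).
have := sum_chi; under eq_bigr do rewrite e.
rewrite sumrB !cs => /eqP; rewrite subr_eq0 !natz eqz_nat => /eqP.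
by [].
Qed.

Lemma nonsq_mul n m : n != 0 -> ~~ issq n -> m != 0 -> ~~ issq m -> issq (n * m).
Proof.
move=> nn0 nsq mn0 msq.
have sub : [set n * x | x in Qs] \subset Ns.
  apply/subsetP => y /imsetP [x]; rewrite !inE => /andP [xn0 /issqP [z hz]] ->.
  rewrite mulf_neq0 //=; apply/negP => /issqP [w hw]; move/negP: nsq; apply.
  have zn0 : z != 0 by apply: contraNneq xn0 => z0; rewrite -hz z0 expr0n.
  by apply/issqP; exists (w / z); rewrite expr_div_n hw hz mulfK // expf_neq0.
have eqs : [set n * x | x in Qs] = Ns.
  apply/eqP; rewrite eqEcard sub /= card_imset; [by rewrite card_QN | exact: mulfI].
have : m \in Ns by rewrite !inE mn0.
rewrite -eqs => /imsetP [x]; rewrite !inE => /andP [_ /issqP [z hz]] ->.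
apply/issqP; exists (n * z); by rewrite mulrA -expr2 exprMn hz.
Qed.

Lemma chiM x y : chi (x * y) = chi x * chi y.
Proof.
have [->|xn0] := eqVneq x 0; first by rewrite mul0r chi0 mul0r.
have [->|yn0] := eqVneq y 0; first by rewrite mulr0 chi0 mulr0.
case: (boolP (issq x)) => [/issqP [a ha]|hx].
  have an0 : a != 0 by apply: contraNneq xn0 => a0; rewrite -ha a0 expr0n.
  by rewrite -ha chi_sq_mul // chi_sq // mul1r.
case: (boolP (issq y)) => [/issqP [b hb]|hy].
  have bn0 : b != 0 by apply: contraNneq yn0 => b0; rewrite -hb b0 expr0n.
  by rewrite -hb mulrC chi_sq_mul // chi_sq // mulr1.
have hxy := @nonsq_mul x y xn0 hx yn0 hy.
rewrite /chi (negPf xn0) (negPf yn0) mulf_eq0 (negPf xn0) (negPf yn0) /=.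
by rewrite hxy (negPf hx) (negPf hy).
Qed.

Lemma chi1 : chi 1 = 1.
Proof. by rewrite -(expr1n F 2) chi_sq // oner_eq0. Qed.

Lemma sum_pred0 : \sum_(u : F) ((u == 0)%:R : int) = 1.
Proof.
rewrite (bigD1 0) //= eqxx big1 ?addr0 // => u /negPf ->. by [].
Qed.

Lemma sum_shift c : \sum_u chi (u - c) = 0.
Proof. by rewrite -[RHS]sum_chi [RHS](reindex_inj (addIr (- c))). Qed.

Lemma sum_uuc c : c != 0 -> \sum_u chi u * chi (u - c) = -1.
Proof.
move=> cn0.
have hinj : injective (fun u : F => 1 - c / u).
  move=> u v /= /eqP; rewrite (inj_eq (addrI 1)) eqr_opp => /eqP.
  by move=> /(mulfI cn0) /invr_inj.
transitivity (\sum_u (chi (1 - c / u) - ((u == 0)%:R : int))).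
  apply: eq_bigr => u _.
  have [->|un0] := eqVneq u 0.
    by rewrite chi0 mul0r invr0 mulr0 subr0 chi1 /= subrr.
  rewrite /= subr0 -chiM.
  have -> : u * (u - c) = u ^+ 2 * (1 - c / u).
    by field.
  by rewrite chi_sq_mul.
rewrite sumrB sum_pred0.
have -> : \sum_u chi (1 - c / u) = 0 by rewrite -[RHS]sum_chi [RHS](reindex_inj hinj).
by rewrite sub0r.
Qed.

Lemma sum_sq_shift c : c != 0 -> \sum_x chi (x ^+ 2 - c) = -1.
Proof.
move=> cn0; rewrite (sumsq (fun u => chi (u - c))).
under eq_bigr do rewrite mulrDl mul1r.
by rewrite big_split /= sum_shift sum_uuc // add0r.
Qed.

Lemma sum_pair A B : \sum_c chi (A - c) * chi (B - c) =
  if A == B then #|F|%:R - 1 else -1.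
Proof.
have [<-|AB] := eqVneq A B.
  transitivity (\sum_(c : F) (1 - ((c - A == 0)%:R : int))).
    apply: eq_bigr => c _.
    have [hc|hc] := eqVneq (c - A) 0.
      by rewrite -opprB hc oppr0 chi0 mul0r subrr.
    have hc' : A - c != 0 by rewrite -opprB oppr_eq0.
    by rewrite /=; case: (chi_vals _ hc') => ->.
  rewrite sumrB.
  have -> : \sum_(c : F) ((c - A == 0)%:R : int) = 1.
    transitivity (\sum_(u:F) ((u == 0)%:R : int)); last exact: sum_pred0.
    by rewrite [RHS](reindex_inj (addIr (- A))).
  by rewrite sumr_const.
rewrite /=.
have d0 : (A - B) / 2 != 0 by rewrite mulf_neq0 ?invr_eq0 // subr_eq0.
rewrite -(sum_sq_shift _ (expf_neq0 2 d0)).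
rewrite [LHS](reindex_inj (addIr ((A + B) / 2))) /=.
apply: eq_bigr => x _; rewrite -chiM; congr chi; field.
exact: h2.
Qed.


Definition phi c := \sum_x chi x * chi (x ^+ 2 - c).

Lemma chi_le1 x : chi x <= 1.
Proof. by rewrite /chi; case: (x == 0); case: (issq x). Qed.

Lemma chi_ge x : -1 <= chi x.
Proof. by rewrite /chi; case: (x == 0); case: (issq x). Qed.

Lemma chi_sqr x : x != 0 -> chi x ^+ 2 = 1.
Proof. by move=> xn0; case: (chi_vals _ xn0) => ->. Qed.

Lemma phi_scale c t : t != 0 -> phi (c * t ^+ 2) = chi t * phi c.
Proof.
move=> tn0; rewrite /phi (reindex_inj (mulfI tn0)) /= big_distrr /=.
apply: eq_bigr => y _.
have -> : (t * y) ^+ 2 - c * t ^+ 2 = t ^+ 2 * (y ^+ 2 - c) by ring.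
by rewrite chi_sq_mul // chiM mulrA.
Qed.

Lemma sum_neq0 : \sum_(t : F) ((t != 0)%:R : int) = #|F|%:R - 1.
Proof.
transitivity (\sum_(t : F) (1 - ((t == 0)%:R : int))).
  by apply: eq_bigr => t _; case: (t == 0).
by rewrite sumrB sum_pred0 sumr_const.
Qed.

Lemma sum_phi2 : \sum_c phi c ^+ 2 <= 2 * (#|F|%:R : int) ^+ 2.
Proof.
set q : int := #|F|%:R.
have E : \sum_c phi c ^+ 2 = \sum_x \sum_y (chi x * chi y *
     (q * (x ^+ 2 == y ^+ 2)%:R - 1)).
  transitivity (\sum_c \sum_x \sum_y (chi x * chi y) * (chi (x ^+ 2 - c) * chi (y ^+ 2 - c))).
    apply: eq_bigr => c _; rewrite expr2 /phi big_distrlr /=.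
    apply: eq_bigr => x _; apply: eq_bigr => y _; ring.
  rewrite exchange_big /=; apply: eq_bigr => x _.
  rewrite exchange_big /=; apply: eq_bigr => y _.
  rewrite -big_distrr /= sum_pair; congr (_ * _).
  by case: (x ^+ 2 == y ^+ 2); rewrite /= ?mulr1 ?mulr0 ?sub0r.
rewrite E.
under eq_bigr do under eq_bigr do rewrite mulrBr mulr1.
under eq_bigr do rewrite sumrB.
rewrite sumrB.
have -> : \sum_x \sum_y chi x * chi y = 0.
  rewrite big1 // => x _; by rewrite -big_distrr /= sum_chi mulr0.
rewrite subr0.
apply: (@le_trans _ _ (\sum_(x : F) 2 * q)); last first.
  by rewrite sumr_const -mulr_natr expr2 -/q; lra.
apply: ler_sum => x _.
apply: (@le_trans _ _ (\sum_(y : F) q * ((y ^+ 2 == x ^+ 2)%:R))).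
  apply: ler_sum => y _; rewrite eq_sym.
  have hq : 0 <= q by rewrite /q.
  case: (y ^+ 2 == x ^+ 2); rewrite /= ?mulr1 ?mulr0.
    have : chi x * chi y <= 1.
      have := chi_le1 x; have := chi_ge x; have := chi_le1 y; have := chi_ge y; nia.
    move: (chi x * chi y) => u hu; nia.
  by [].
rewrite -big_distrr /=.
have -> : \sum_(y : F) (((y ^+ 2 == x ^+ 2)%:R) : int) = (nrt (x ^+ 2))%:Z.
  rewrite /nrt -natz -sumr_const [RHS]big_mkcond /=; apply: eq_bigr => y _.
  by rewrite inE; case: (y ^+ 2 == x ^+ 2).
rewrite nrtE.
have := chi_le1 (x ^+ 2); have hq : 0 <= q by rewrite /q. nia.
Qed.

Lemma phi1_bound : ((#|F|%:R : int) - 1) * phi 1 ^+ 2 <= 4 * (#|F|%:R : int) ^+ 2.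
Proof.
have h1 := sumsq (fun u => phi u ^+ 2).
have up : \sum_t phi (t ^+ 2) ^+ 2 <= 4 * (#|F|%:R : int) ^+ 2.
  rewrite /= in h1; rewrite h1.
  apply: (@le_trans _ _ (\sum_u 2 * phi u ^+ 2)).
    apply: ler_sum => u _; have := chi_le1 u; have := sqr_ge0 (phi u).
    move: (phi u ^+ 2) (chi u) => a b; nia.
  rewrite -big_distrr /=; have := sum_phi2; lra.
apply: le_trans up.
rewrite -sum_neq0 big_distrl /=; apply: ler_sum => t _.
have [->|tn0] := eqVneq t 0; first by rewrite /= mul0r sqr_ge0.
by rewrite /= mul1r -(mul1r (t ^+ 2)) phi_scale // exprMn chi_sqr // mul1r.
Qed.

Lemma sum_a4 : \sum_a chi ((a ^+ 2) ^+ 2 - 1) = -1 + phi 1.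
Proof.
rewrite (sumsq (fun u => chi (u ^+ 2 - 1))).
under eq_bigr do rewrite mulrDl mul1r.
by rewrite big_split /= sum_sq_shift ?oner_eq0.
Qed.

Lemma sum_nrt c : \sum_a ((a ^+ 2 == c)%:R : int) = (nrt c)%:Z.
Proof.
rewrite /nrt -natz -sumr_const [RHS]big_mkcond /=; apply: eq_bigr => y _.
by rewrite inE; case: (y ^+ 2 == c).
Qed.

Lemma exists_good (e : int) : (e = 1 \/ e = -1) -> (23 <= #|F|)%N ->
  exists a, chi (a ^+ 2 - 1) = - e /\ chi (a ^+ 2 + 1) = - e.
Proof.
move=> he hq.
case: (boolP [exists a, (chi (a ^+ 2 - 1) == - e) && (chi (a ^+ 2 + 1) == - e)]).
  by move=> /existsP [a /andP [/eqP h1 /eqP h2']]; exists a.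
rewrite negb_exists => /forallP hno.
set S := \sum_a (1 - e * chi (a ^+ 2 - 1)) * (1 - e * chi (a ^+ 2 + 1)).
have hm1 : (-1 : F) != 0 by rewrite oppr_eq0 oner_eq0.
have ES : S = (#|F|%:R : int) + 2 * e - 1 + phi 1.
  rewrite /S.
  transitivity (\sum_(a : F) (1 - e * chi (a ^+ 2 - 1) - e * chi (a ^+ 2 - (-1))
     + e ^+ 2 * chi ((a ^+ 2) ^+ 2 - 1))).
    apply: eq_bigr => a _; rewrite opprK.
    have -> : (a ^+ 2) ^+ 2 - 1 = (a ^+ 2 - 1) * (a ^+ 2 + 1) by ring.
    rewrite chiM; ring.
  rewrite !big_split /= !sumrN -!big_distrr /= sum_a4 sum_sq_shift ?oner_eq0 //.
  rewrite sum_sq_shift // sumr_const.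
  have : e ^+ 2 = 1 by case: he => ->.
  move=> ->; ring.
have hS : S <= 2 * (nrt 1)%:Z + 2 * (nrt (-1))%:Z.
  rewrite -!sum_nrt !big_distrr -big_split /=.
  apply: ler_sum => a _.
  have := hno a; rewrite negb_and => hna.
  have c1 : (chi (a ^+ 2 - 1) == 0) = (a ^+ 2 == 1) by rewrite chi_eq0 subr_eq0.
  have c2 : (chi (a ^+ 2 + 1) == 0) = (a ^+ 2 == -1).
    by rewrite chi_eq0 -(subr_eq0 _ (-1)) opprK.
  rewrite -c1 -c2.
  move: hna; have := chi_le1 (a ^+ 2 - 1); have := chi_ge (a ^+ 2 - 1);
    have := chi_le1 (a ^+ 2 + 1); have := chi_ge (a ^+ 2 + 1);
    move: (chi (a ^+ 2 - 1)) (chi (a ^+ 2 + 1)) => x y.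
  move=> g1 g2 g3 g4.
  have hx : x = -1 \/ x = 0 \/ x = 1 by lia.
  have hy : y = -1 \/ y = 0 \/ y = 1 by lia.
  case: he => ->; case: hx => [->|[->|->]]; case: hy => [->|[->|->]]; by [].
have := phi1_bound; rewrite ES in hS.
have hn1 := nrtE 1; have hn2 := nrtE (-1).
have := chi_le1 1; have := chi_le1 (-1).
have hq' : (23 <= (#|F|%:R : int)) by rewrite natz; lia.
move: hS hn1 hn2 hq'; move: (phi 1) (#|F|%:R : int) (nrt 1)%:Z (nrt (-1))%:Z
   (chi 1) (chi (-1)) => p Q n1 n2 c1 c2.
move=> hS hn1 hn2 hq' hc2 hc1 hb.
have hp : p <= 11 - Q by case: he => he; lia.
have hp2 : (Q - 11) ^+ 2 <= p ^+ 2 by nia.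
nia.
Qed.


End FF.

Lemma defect_big p : prime p -> (23 <= p)%N -> ~ complete_mod lucas p.
Proof.
move=> pp hp hc.
have nz : forall k : nat, (0 < k < p)%N -> (k%:R : 'F_p) != 0.
  move=> k hk; apply/negP => /eqP h; have := congr1 (@nat_of_ord _) h.
  rewrite (val_Fp_nat pp) modn_small /=; [lia | lia].
have h2 : (2 : 'F_p) != 0 by apply: nz; lia.
have h5 : (5 : 'F_p) != 0 by apply: nz; lia.
have he := chi_vals _ _ h5.
have hq : (23 <= #|'F_p|)%N by rewrite card_Fp.
have [a [ha1 ha2]] := exists_good _ h2 _ he hq.
set t : 'F_p := 2 * a.
have hr : (val t < p)%N := leq_trans (ltn_ord t) (eq_leq (Fp_cast pp)).
have [n [_ hn]] := hc (val t) hr.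
have hL : ((lucas n)%:R : 'F_p) = t.
  by apply: val_inj; rewrite /= (val_Fp_nat pp) hn modn_small.
have H := congr1 (fun z : int => (z%:~R : 'F_p)) (LF_id n).
rewrite /= !(rmorphB, rmorphM, rmorphXn, rmorphN1) /= /Lz -pmulrn hL in H.
move: H; set y : 'F_p := (Fz n)%:~R.
have h4 : (4 : 'F_p) != 0.
  have -> : (4 : 'F_p) = 2 * 2 by rewrite -natrM.
  by rewrite mulf_neq0.
have key : forall s : 'F_p, (2 * a) ^+ 2 - 5 * y ^+ 2 = 4 * s ->
   a ^+ 2 - s = (y / 2) ^+ 2 * 5.
  move=> s /eqP; rewrite subr_eq => /eqP hs.
  apply: (mulIf h4).
  rewrite expr_div_n.
  have -> : (2 : 'F_p) ^+ 2 = 4 by rewrite expr2 -natrM.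
  have -> : y ^+ 2 / 4 * 5 * 4 = y ^+ 2 * 5 * (4 / 4) by ring.
  rewrite divff // mulr1.
  have -> : (a ^+ 2 - s) * 4 = (2 * a) ^+ 2 - 4 * s by ring.
  rewrite hs; ring.
have fin : forall s : 'F_p, chi _ (a ^+ 2 - s) = - chi _ (5 : 'F_p) -> (2 * a) ^+ 2 - 5 * y ^+ 2 = 4 * s -> False.
  move=> s hs H0; have E := key s H0; rewrite E in hs.
  have [y0|yn0] := eqVneq (y / 2) 0.
    move: hs; rewrite y0 expr0n mul0r chi0; case: he => ->; by [].
  move: hs; rewrite chi_sq_mul //; case: he => ->; by [].
move=> H.
have H2 : (2 * a) ^+ 2 - 5 * y ^+ 2 = 4 * (-1) ^+ n.
  by move: H; rewrite -/t !mulrz_nat !expr2.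
move: H2; rewrite -signr_odd; case: (odd n) => /= H2.
  by apply: (fin (-1)); [rewrite opprK | rewrite H2 expr1].
by apply: (fin 1) => //; rewrite H2 expr0.
Qed.
Local Close Scope ring_scope.

Lemma prime_defect p : prime p -> p \notin [:: 2; 3; 7]%N -> ~ complete_mod lucas p.
Proof.
move=> pp hn.
case: (leqP 23 p) => [hp|hlt]; first exact: defect_big.
have H : all (fun p => prime p ==> (p \in [:: 2; 3; 7; 5; 11; 13; 17; 19]%N)) (iota 0 23).
  by vm_compute.
move/allP: H => /(_ p); rewrite mem_iota add0n hlt pp => /(_ isT) /=.
move: hn; rewrite !inE => hn hm.
have : (p = 5 \/ p = 11 \/ p = 13 \/ p = 17 \/ p = 19)%N by move: hn hm; clear; lia.
case=> [->|[->|[->|[->|->]]]].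
- exact: def5.
- exact: def11.
- exact: def13.
- exact: def17.
- exact: def19.
Qed.

Lemma classify a b c : (2 <= 2 ^ a * 3 ^ b * 7 ^ c)%N ->
  ~~ (8 %| 2 ^ a * 3 ^ b * 7 ^ c)%N -> ~~ (12 %| 2 ^ a * 3 ^ b * 7 ^ c)%N ->
  ~~ (18 %| 2 ^ a * 3 ^ b * 7 ^ c)%N -> ~~ (21 %| 2 ^ a * 3 ^ b * 7 ^ c)%N ->
  ~~ (28 %| 2 ^ a * 3 ^ b * 7 ^ c)%N -> ~~ (49 %| 2 ^ a * 3 ^ b * 7 ^ c)%N ->
  (2 ^ a * 3 ^ b * 7 ^ c \in [:: 2; 4; 6; 7; 14]%N) \/
  (exists j : nat, (1 <= j)%N /\ 2 ^ a * 3 ^ b * 7 ^ c = 3 ^ j).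
Proof.
move=> h2 h8 h12 h18 h21 h28 h49.
have D : forall d k, (2 ^ a * 3 ^ b * 7 ^ c = k * d)%N -> (d %| 2 ^ a * 3 ^ b * 7 ^ c)%N.
  by move=> d k ->; apply: dvdn_mull.
case: c h2 h8 h12 h18 h21 h28 h49 D => [|[|c]] h2 h8 h12 h18 h21 h28 h49 D.
- case: a h2 h8 h12 h18 h21 h28 h49 D => [|[|[|a]]] h2 h8 h12 h18 h21 h28 h49 D.
  + right; exists b; split; last by rewrite expn0 mul1n muln1.
    by case: b h2 {h8 h12 h18 h21 h28 h49 D}.
  + case: b h2 h8 h12 h18 h21 h28 h49 D => [|[|b]] h2 h8 h12 h18 h21 h28 h49 D.
    * by left.
    * by left.
    * exfalso; move/negP: h18; apply; apply: (D _ (3 ^ b)); rewrite !expnS; lia.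
  + case: b h2 h8 h12 h18 h21 h28 h49 D => [|b] h2 h8 h12 h18 h21 h28 h49 D.
    * by left.
    * exfalso; move/negP: h12; apply; apply: (D _ (3 ^ b)); rewrite !expnS; lia.
  + exfalso; move/negP: h8; apply; apply: (D _ (2 ^ a * 3 ^ b)); rewrite !expnS; lia.
- case: b h2 h8 h12 h18 h21 h28 h49 D => [|b] h2 h8 h12 h18 h21 h28 h49 D; last first.
    exfalso; move/negP: h21; apply; apply: (D _ (2 ^ a * 3 ^ b)); rewrite !expnS; lia.
  case: a h2 h8 h12 h18 h21 h28 h49 D => [|[|a]] h2 h8 h12 h18 h21 h28 h49 D.
  + by left.
  + by left.
  + exfalso; move/negP: h28; apply; apply: (D _ (2 ^ a)); rewrite !expnS; lia.
- exfalso; move/negP: h49; apply; apply: (D _ (2 ^ a * 3 ^ b * 7 ^ c)); rewrite !expnS; lia.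
Qed.

Theorem mainTheorem6 (m : nat) (hm : 2 <= m) :
  complete_mod lucas m <->
  (m \in [:: 2; 4; 6; 7; 14]) \/ (exists j : nat, 1 <= j /\ m = 3 ^ j).
Proof.
split; last first.
  by case=> [h|[j [hj ->]]]; [exact: comp_small | exact: complete_pow3].
move=> hc.
have m0 : 0 < m by lia.
have sub : forall d, 0 < d -> d %| m -> complete_mod lucas d.
  by move=> d hd hdm; exact: (complete_dvd m d m0 hd hdm hc).
have pdv : forall p, prime p -> p %| m -> p \in [:: 2; 3; 7].
  move=> p pp hpm; case: (boolP (p \in [:: 2; 3; 7])) => // hn; exfalso.
  exact: (prime_defect p pp hn (sub p (prime_gt0 pp) hpm)).
have [m1 c2 e1] := pfactor_coprime (isT : prime 2) m0.
have m1p : 0 < m1 by move: m0; rewrite e1 muln_gt0 => /andP [].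
have [m2 c3 e2] := pfactor_coprime (isT : prime 3) m1p.
have m2p : 0 < m2 by move: m1p; rewrite e2 muln_gt0 => /andP [].
have [r c7 e3] := pfactor_coprime (isT : prime 7) m2p.
have rp : 0 < r by move: m2p; rewrite e3 muln_gt0 => /andP [].
have rm2 : r %| m2 by rewrite e3 dvdn_mulr.
have rm1 : r %| m1 by rewrite e2 dvdn_mulr.
have rm : r %| m by rewrite e1 (dvdn_trans rm1) // dvdn_mulr.
have r1 : r = 1.
  apply/eqP; rewrite eqn_leq rp andbT; apply: contraT; rewrite -ltnNge => hr.
  have pr := pdiv_prime hr.
  have hd := pdiv_dvd r.
  have := pdv _ pr (dvdn_trans hd rm).
  rewrite !inE => /orP [/eqP e|/orP [/eqP e|/eqP e]].
  - have := coprime_dvdr rm1 c2; rewrite prime_coprime // -e hd. by [].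
  - have := coprime_dvdr rm2 c3; rewrite prime_coprime // -e hd. by [].
  - by move: c7; rewrite prime_coprime // -e hd.
have em : m = 2 ^ logn 2 m * 3 ^ logn 3 m1 * 7 ^ logn 7 m2.
  move: e1 e2 e3; set a := logn 2 m; set b := logn 3 m1; set c := logn 7 m2.
  move=> e1 e2 e3; rewrite {1}e1 e2 e3 r1; move: (2 ^ a) (3 ^ b) (7 ^ c) => x y z.
  lia.
have nd : forall d, 0 < d -> ~ complete_mod lucas d -> ~~ (d %| m).
  by move=> d hd hn; apply/negP => h; apply: hn; exact: sub.
move: (logn 2 m) (logn 3 m1) (logn 7 m2) em => a b c em.
rewrite em; apply: classify; rewrite -em //.
- by apply: (nd 8) => //; exact: def8.
- by apply: (nd 12) => //; exact: def12.
- by apply: (nd 18) => //; exact: def18.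
- by apply: (nd 21) => //; exact: def21.
- by apply: (nd 28) => //; exact: def28.
- by apply: (nd 49) => //; exact: def49.
Qed.
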